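(* Let $a\in\mathcal A$. If area $a$'s decentralized DC-OPF problem has a feasible solution with $T_{a,(i,j)}=0$ for all $(i,j)\in\mathcal T_a$, then for each tieline $(i,j)\in\mathcal T_a$ there exists a critical price $\bar\mu_{(i,j)}>0$ such that whenever $\mu_{(i,j)}\ge\bar\mu_{(i,j)}$, the optimal solution of the decentralized DC-OPF problem has $T_{a,(i,j)}=0$.
   Context: Area $a$ of a multi-area power system has buses $\mathcal N_a$, internal lines $\mathcal F_a$ with reactances $x_{a,(i,j)}>0$ and limits $\overline F_{a,(i,j)}$, voltage angles $\theta_a$, known loads $D_a$, admittance matrix $B_a$, generators $\mathcal G_a$ with outputs $P_a$, limits $\underline P_a,\overline P_a$, incidence matrix $M_a$ and strictly convex cost functions $C_{a,g}$. Its tielines form the set $\mathcal T_a$ of pairs $(i,j)$ with $i$ a bus of $a$ and $j$ a bus of another area $a'$; flows $T_{a,(i,j)}$ (vector $T_a$, incidence matrix $R_a$), reactances $\bar x_{a,(i,j)}$, capacities $\bar T_{a,(i,j)}$. Given parameters $\alpha_{a',j}$, $\theta_{a',j}$ for each $(i,j)\in\mathcal T_a$ and capacity prices $\mu_{(i,j)}\ge 0$, the decentralized DC-OPF of area $a$ is: minimize $\sum_{g\in\mathcal G_a}C_{a,g}(P_{a,g})-\sum_{(i,j)\in\mathcal T_a}\alpha_{a',j}T_{a,(i,j)}+\sum_{(i,j)\in\mathcal T_a}\frac{\mu_{(i,j)}}{2}(|T_{a,(i,j)}|-\bar T_{a,(i,j)})$ over $P_a,\theta_a,T_a$ subject to $B_a\theta_a+R_aT_a=M_aP_a-D_a$,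 $\underline P_a\le P_a\le\overline P_a$, $-\overline F_{a,(i,j)}\le(\theta_{a,i}-\theta_{a,j})/x_{a,(i,j)}\le\overline F_{a,(i,j)}$ for $(i,j)\in\mathcal F_a$, $T_{a,(i,j)}=(\theta_{a,i}-\theta_{a',j})/\bar x_{a,(i,j)}$ for $(i,j)\in\mathcal T_a$, and $\theta_{a,1}=0$ if $a=1$. *)

(* Defs.v *)
From HB Require Import structures.
From mathcomp Require Import all_boot all_order all_algebra.
From mathcomp Require Import reals.
Set Implicit Arguments. Unset Strict Implicit. Unset Printing Implicit Defensive.
Import Order.TTheory GRing.Theory Num.Theory.
Local Open Scope ring_scope.

(* Buses: 'I_nb.+1, bus "1" of the paper is ord0.
   G : generators, located at bus gbus g (incidence matrix M_a).
   Tl : tielines (i,j) with i = tbus t a bus of area a and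
        j = text t a bus of another area (external buses of type Ext). *)
Record area (R : realType) (nb : nat) (L G Tl : finType) (Ext : Type) := Area {
  lfrom : L -> 'I_nb.+1;
  lto   : L -> 'I_nb.+1;
  x     : L -> R;
  Fbar  : L -> R;
  D     : 'I_nb.+1 -> R;
  gbus  : G -> 'I_nb.+1;
  Pmin  : G -> R;
  Pmax  : G -> R;
  C     : G -> R -> R;
  tbus  : Tl -> 'I_nb.+1;
  text  : Tl -> Ext;
  xbar  : Tl -> R;
  Tbar  : Tl -> R
}.

Definition strictly_convex (R : realType) (f : R -> R) :=
  forall (u v s : R), u != v -> 0 < s < 1 ->
    f (s * u + (1 - s) * v) < s * f u + (1 - s) * f v.

Section Area.
Variables (R : realType) (nb : nat) (L G Tl : finType) (Ext : Type).
Variable (A : area R nb L G Tl Ext).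

(* (B_a theta)_i : DC admittance (susceptance Laplacian) matrix applied to theta *)
Definition Btheta (th : 'I_nb.+1 -> R) (i : 'I_nb.+1) : R :=
  \sum_(l : L | lfrom A l == i) (th (lfrom A l) - th (lto A l)) / x A l
  - \sum_(l : L | lto A l == i) (th (lfrom A l) - th (lto A l)) / x A l.

Definition RT (T : Tl -> R) (i : 'I_nb.+1) : R :=
  \sum_(t : Tl | tbus A t == i) T t.

Definition MP (P : G -> R) (i : 'I_nb.+1) : R :=
  \sum_(g : G | gbus A g == i) P g.

Definition feasible (a : nat) (theta_ext : Ext -> R)
    (P : G -> R) (th : 'I_nb.+1 -> R) (T : Tl -> R) : Prop :=
  [/\ forall i, Btheta th i + RT T i = MP P i - D A i,
      forall g, Pmin A g <= P g <= Pmax A g,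
      forall l, - Fbar A l <= (th (lfrom A l) - th (lto A l)) / x A l <= Fbar A l,
      forall t, T t = (th (tbus A t) - theta_ext (text A t)) / xbar A t
    & a = 1%N -> th ord0 = 0].

Definition objective (alpha : Ext -> R) (mu : Tl -> R)
    (P : G -> R) (T : Tl -> R) : R :=
  \sum_(g : G) C A g (P g) - \sum_(t : Tl) alpha (text A t) * T t
  + \sum_(t : Tl) mu t / 2 * (`|T t| - Tbar A t).

Definition optimal (a : nat) (theta_ext alpha : Ext -> R) (mu : Tl -> R)
    (P : G -> R) (th : 'I_nb.+1 -> R) (T : Tl -> R) : Prop :=
  feasible a theta_ext P th T /\
  forall P' th' T', feasible a theta_ext P' th' T' ->
    objective alpha mu P T <= objective alpha mu P' T'.

End Area.

Definition upd (R : realType) (Tl : finType) (mu : Tl -> R) (t : Tl) (m : R) : Tl -> R :=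
  fun k => if k == t then m else mu k.

(* Main.v *)
Require Import Defs.
From HB Require Import structures.
From mathcomp Require Import all_boot all_order all_algebra.
From mathcomp Require Import reals.
From mathcomp Require Import ring lra.
From Stdlib Require Import FunctionalExtensionality.
Set Implicit Arguments. Unset Strict Implicit. Unset Printing Implicit Defensive.
Import Order.TTheory GRing.Theory Num.Theory.
Local Open Scope ring_scope.


Section Hoff.
Variable R : realType.
Variable V : eqType.

Definition aff (s : seq V) (h : (V -> R) -> R) :=
  exists (a : V -> R) (b : R), forall z, h z = \sum_(w <- s) a w * z w + b.

Definition ev (w : V) : V -> R := fun u => (u == w)%:R.
Definition coef (h : (V -> R) -> R) (w : V) := h (ev w) - h (fun _ => 0).
Definition updf (y : V -> R) (v : V) (u : R) : V -> R :=
  fun w => if w == v then u else y w.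

Lemma aff_ext s f g : (forall z, f z = g z) -> aff s f -> aff s g.
Proof. move=> E [a [b H]]; exists a, b => z; by rewrite -E. Qed.

Lemma aff_cst s c : aff s (fun _ => c).
Proof. exists (fun _ => 0), c => z; by rewrite big1 ?add0r // => w _; rewrite mul0r. Qed.

Lemma aff_add s f g : aff s f -> aff s g -> aff s (fun z => f z + g z).
Proof.
move=> [a [b Hf]] [a' [b' Hg]]; exists (fun w => a w + a' w), (b + b') => z.
rewrite Hf Hg; have -> : \sum_(w <- s) (a w + a' w) * z w = \sum_(w <- s) a w * z w + \sum_(w <- s) a' w * z w.
  by rewrite -big_split; apply: eq_bigr => w _; rewrite mulrDl.
ring.
Qed.

Lemma aff_scale s c f : aff s f -> aff s (fun z => c * f z).
Proof.
move=> [a [b Hf]]; exists (fun w => c * a w), (c * b) => z.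
rewrite Hf mulrDr mulr_sumr; congr (_ + _); apply: eq_bigr => w _; ring.
Qed.

Lemma aff_scaler s c f : aff s f -> aff s (fun z => f z * c).
Proof. move=> H; apply: aff_ext (aff_scale c H) => z; ring. Qed.

Lemma aff_opp s f : aff s f -> aff s (fun z => - f z).
Proof. move=> H; apply: aff_ext (aff_scale (-1) H) => z; ring. Qed.

Lemma aff_sub s f g : aff s f -> aff s g -> aff s (fun z => f z - g z).
Proof. by move=> Hf Hg; apply: aff_add Hf (aff_opp Hg). Qed.


Lemma sum_ev s w (F : V -> R) : uniq s -> w \in s ->
  \sum_(u <- s) (u == w)%:R * F u = F w.
Proof.
elim: s => [//|u s IH] /= /andP[us uss]; rewrite in_cons big_cons.
case: (eqVneq u w) => [<- _|nuw /= ws].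
  rewrite mul1r big_seq big1 ?addr0 // => u' u's.
  have /negbTE -> : u' != u by apply: contraNneq us => <-.
  by rewrite mul0r.
by rewrite mul0r add0r IH.
Qed.

Lemma aff_coord s w : uniq s -> w \in s -> aff s (fun z => z w).
Proof. move=> us ws; exists (ev w), 0 => z; by rewrite addr0 sum_ev. Qed.

Lemma aff_sum s (J : Type) (r : seq J) (P : pred J) (F : J -> (V -> R) -> R) :
  (forall j, aff s (F j)) -> aff s (fun z => \sum_(j <- r | P j) F j z).
Proof.
move=> HF; elim: r => [|j r IH].
  by apply: aff_ext (aff_cst s 0) => z; rewrite big_nil.
case Pj: (P j).
  by apply: aff_ext (aff_add (HF j) IH) => z; rewrite big_cons Pj.
by apply: aff_ext IH => z; rewrite big_cons Pj.
Qed.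

Lemma aff_repr s h : uniq s -> aff s h ->
  forall z, h z = \sum_(w <- s) coef h w * z w + h (fun _ => 0).
Proof.
move=> us [a [b H]] z.
have H0 : h (fun _ => 0) = b by rewrite H big1 ?add0r // => w _; rewrite mulr0.
rewrite H H0; congr (_ + _); rewrite big_seq_cond [RHS]big_seq_cond.
apply: eq_bigr => w /andP[ws _]; rewrite /coef H H0 addrK; congr (_ * _).
by rewrite /ev; under eq_bigr do rewrite mulrC; rewrite sum_ev.
Qed.

Lemma aff_lip s h : uniq s -> aff s h -> forall z z' d,
  (forall w, w \in s -> `|z' w - z w| <= d) ->
  `|h z' - h z| <= (\sum_(w <- s) `|coef h w|) * d.
Proof.
move=> us ah z z' d Hd; rewrite (aff_repr us ah z) (aff_repr us ah z').
rewrite opprD addrACA subrr addr0 -sumrB mulr_suml.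
apply: le_trans (ler_norm_sum _ _ _) _.
rewrite big_seq_cond [X in _ <= X]big_seq_cond; apply: ler_sum => w /andP[ws _].
by rewrite -mulrBr normrM ler_wpM2l // Hd.
Qed.


Lemma updf_upd y v u u' : updf (updf y v u) v u' = updf y v u'.
Proof. apply: functional_extensionality => w; rewrite /updf; by case: (w == v). Qed.

Lemma hoffman s : uniq s -> forall (I : finType) (h : I -> (V -> R) -> R),
  (forall i, aff s (h i)) -> (exists z0, forall i, h i z0 <= 0) ->
  exists K, 0 <= K /\ forall z r, 0 <= r -> (forall i, h i z <= r) ->
    exists z', (forall i, h i z' <= 0) /\
               forall w, w \in s -> `|z' w - z w| <= K * r.
Proof.
elim: s => [|v s IH] /=.
  move=> _ I h ha [z0 H0]; exists 0; split=> // z r r0 Hz; exists z; split.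
    move=> i; have [a [b E]] := ha i; by move: (H0 i); rewrite !E !big_nil.
  by [].
move=> /andP[vs us] I h ha [z0 H0].
pose al i := coef (h i) v.
pose g i y := h i (updf y v 0).
have gE : forall i z, g i z = \sum_(w <- s) coef (h i) w * z w + h i (fun _ => 0).
  move=> i z; rewrite /g (aff_repr _ (ha i)) /= ?vs ?us // big_cons /updf eqxx mulr0 add0r.
  congr (_ + _); rewrite big_seq [RHS]big_seq; apply: eq_bigr => w ws.
  by have /negbTE -> : w != v by apply: contraNneq vs => <-.
have hg : forall i z, h i z = al i * z v + g i z.
  move=> i z; rewrite gE (aff_repr _ (ha i)) /= ?vs ?us // big_cons addrA.
  congr (_ + _); congr (_ + _); rewrite big_seq [RHS]big_seq; apply: eq_bigr => w ws //.
have ag : forall i, aff s (g i).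
  by move=> i; exists (coef (h i)), (h i (fun _ => 0)); apply: gE.
have gupd : forall i y u, g i (updf y v u) = g i y.
  by move=> i y u; rewrite /g updf_upd.
pose h' (k : (I + (I * I))%type) (y : V -> R) : R :=
  match k with
  | inl i => if al i == 0 then g i y else 0
  | inr p => if (0 < al p.1) && (al p.2 < 0) then - al p.2 * g p.1 y + al p.1 * g p.2 y else 0
  end.
have ah' : forall k, aff s (h' k).
  move=> k; case: k => [i|[i j]]; rewrite /h' /=.
    case: (al i == 0); last exact: aff_cst.
    by apply: aff_ext (ag i).
  case: (_ && _); last exact: aff_cst.
  by apply: aff_add; apply: aff_scale; apply: aff_ext (ag _).
have comb : forall i j z, - al j * g i z + al i * g j z = - al j * h i z + al i * h j z.
  by move=> i j z; rewrite !hg; ring.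
have H0' : exists z0, forall k, h' k z0 <= 0.
  exists z0; case=> [i|[i j]]; rewrite /h' /=.
    by case: eqP => // E; move: (H0 i); rewrite hg E mul0r add0r.
  case: andP => [[ai aj]|_] //; rewrite comb.
  have := H0 i; have := H0 j => Hj Hi; nra.
have [K' [K'0 HK']] := IH us _ h' ah' H0'.
pose S := \sum_i `|al i|.
pose M := 1 + 2 * S.
pose Lam := \sum_i \sum_(w <- s) `|coef (g i) w|.
pose Sinv := \sum_i `|al i|^-1.
have leS : forall i, `|al i| <= S.
  by move=> i; rewrite /S (bigD1 i) //= lerDl sumr_ge0.
have leSinv : forall i, `|al i|^-1 <= Sinv.
  by move=> i; rewrite /Sinv (bigD1 i) //= lerDl sumr_ge0 // => k _; rewrite invr_ge0.
have leLam : forall i, \sum_(w <- s) `|coef (g i) w| <= Lam.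
  by move=> i; rewrite /Lam (bigD1 i) //= lerDl sumr_ge0 // => k _; apply: sumr_ge0.
have S0 : 0 <= S by apply: sumr_ge0.
have Sinv0 : 0 <= Sinv by apply: sumr_ge0 => i _; rewrite invr_ge0.
have Lam0 : 0 <= Lam by apply: sumr_ge0 => i _; apply: sumr_ge0.
have M1 : 1 <= M by rewrite /M lerDl; nra.
exists (K' * M + (1 + Lam * K' * M) * Sinv); split.
  apply: addr_ge0; first nra.
  apply: mulr_ge0 => //; have : 0 <= Lam * K' * M by apply: mulr_ge0 => //; [nra|lra].
  lra.
move=> z r r0 Hz.
have Mr0 : 0 <= M * r by nra.
have Hz' : forall k, h' k z <= M * r.
  case=> [i|[i j]]; rewrite /h' /=.
    case: eqP => E; last exact: Mr0.
    rewrite -(add0r (g i z)) -(mul0r (z v)) -E -hg; have := Hz i; nra.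
  case: andP => [[ai aj]|_]; last exact: Mr0; rewrite comb.
  have Hi := Hz i; have Hj := Hz j; have := leS i; have := leS j.
  rewrite (ger0_norm (ltW ai)) (ltr0_norm aj) => Sj Si.
  have h1 : - al j * h i z <= - al j * r by apply: ler_wpM2l => //; lra.
  have h2 : al i * h j z <= al i * r by apply: ler_wpM2l => //; lra.
  have h3 : (al i - al j) * r <= (2 * S) * r by apply: ler_wpM2r => //; lra.
  rewrite /M; lra.
have [y' [Hy' Dy']] := HK' z (M * r) Mr0 Hz'.
pose d := K' * (M * r).
have d0 : 0 <= d by apply: mulr_ge0.
have Lip : forall i, `|g i y' - g i z| <= Lam * d.
  move=> i; apply: le_trans (aff_lip us (ag i) Dy') _.
  by apply: ler_wpM2r => //; apply: leLam.
pose E := r + Lam * d.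
have E0 : 0 <= E by apply: addr_ge0 => //; apply: mulr_ge0.
pose b i := - g i y' / al i.
have bal : forall i, al i != 0 -> b i * al i = - g i y'.
  by move=> i ne; rewrite /b divfK.
pose u := z v.
pose up := \big[Order.min/u]_(i | 0 < al i) b i.
pose u' := \big[Order.max/up]_(j | al j < 0) b j.
have upu : up <= u by apply: bigmin_le_id.
have upb : forall i, 0 < al i -> up <= b i by move=> i ai; apply: bigmin_le_cond.
have bu' : forall j, al j < 0 -> b j <= u' by move=> j aj; apply: le_bigmax_cond.
have upu' : up <= u' by apply: bigmax_ge_id.
have bij : forall i j, 0 < al i -> al j < 0 -> b j <= b i.
  move=> i j ai aj; have := Hy' (inr (i, j)); rewrite /h' /= ai aj /=.
  have Hbi := bal i (lt0r_neq0 ai); have Hbj := bal j (ltr0_neq0 aj).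
  move=> H.
  have : (b j - b i) * (al i * - al j) <= 0.
    have -> : (b j - b i) * (al i * - al j) = - al j * g i y' + al i * g j y'.
      have -> : (b j - b i) * (al i * - al j) = - (b j * al j) * al i + b i * al i * al j by ring.
      rewrite Hbi Hbj; ring.
    exact: H.
  have p : 0 < al i * - al j by apply: mulr_gt0 => //; rewrite oppr_gt0.
  rewrite pmulr_lle0 // subr_le0 //.
have u'b : forall i, 0 < al i -> u' <= b i.
  move=> i ai; apply: bigmax_le; first exact: upb.
  by move=> j aj; apply: bij.
exists (updf y' v u'); split.
  move=> i; rewrite hg gupd /updf eqxx.
  case: (ltgtP (al i) 0) => [an|ap|a0].
  - have := bu' i an; have := bal i (ltr0_neq0 an) => Hb Hb'.
    have : al i * u' <= al i * b i by apply: ler_wnM2l => //; apply: ltW.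
    rewrite [al i * b i]mulrC Hb; lra.
  - have := u'b i ap; have := bal i (lt0r_neq0 ap) => Hb Hb'.
    have : al i * u' <= al i * b i by apply: ler_wpM2l => //; apply: ltW.
    rewrite [al i * b i]mulrC Hb; lra.
  - have := Hy' (inl i); rewrite /h' /= a0 eqxx mul0r add0r; exact.
have Eb1 : forall j, al j < 0 -> b j - u <= E * Sinv.
  move=> j aj; have Hbj := bal j (ltr0_neq0 aj).
  have L1 := Lip j; have H := Hz j; rewrite hg -/u in H.
  have p : 0 < - al j by rewrite oppr_gt0.
  have : (b j - u) * - al j <= E.
    have -> : (b j - u) * - al j = - (b j * al j) + al j * u by ring.
    rewrite Hbj opprK /E; have := ler_norm (g j y' - g j z); lra.
  rewrite -ler_pdivlMr // => H1; apply: le_trans H1 _.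
  rewrite ler_wpM2l // -(ltr0_norm aj); exact: leSinv.
have Eb2 : forall i, 0 < al i -> u - b i <= E * Sinv.
  move=> i ai; have Hbi := bal i (lt0r_neq0 ai).
  have L1 := Lip i; have H := Hz i; rewrite hg -/u in H.
  have : (u - b i) * al i <= E.
    have -> : (u - b i) * al i = al i * u - b i * al i by ring.
    rewrite Hbi /E; have := ler_norm (g i y' - g i z); lra.
  rewrite -ler_pdivlMr // => H1; apply: le_trans H1 _.
  rewrite ler_wpM2l // -(gtr0_norm ai); exact: leSinv.
have ES0 : 0 <= E * Sinv by apply: mulr_ge0.
have hi : u' <= u + E * Sinv.
  apply: bigmax_le; first lra.
  move=> j aj; have := Eb1 j aj; lra.
have lo : u - E * Sinv <= up.
  apply: le_bigmin; first lra.
  move=> i ai; have := Eb2 i ai; lra.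
have KM : 0 <= K' * M * r by apply: mulr_ge0 => //; apply: mulr_ge0 => //; lra.
have ED : E * Sinv = (1 + Lam * K' * M) * Sinv * r by rewrite /E /d; ring.
move=> w; rewrite in_cons; case/orP => [/eqP ->|ws].
  rewrite /updf eqxx -/u.
  have : `|u' - u| <= E * Sinv by rewrite ler_norml; lra.
  rewrite ED => H; apply: le_trans H _.
  have : 0 <= K' * M * r by [].
  rewrite mulrDl mulrDl -mulrA; lra.
have /negbTE nwv : w != v by apply: contraNneq vs => <-.
rewrite /updf nwv; apply: le_trans (Dy' w ws) _.
have : 0 <= (1 + Lam * K' * M) * Sinv * r by rewrite -ED.
rewrite mulrDl mulrA; lra.
Qed.

End Hoff.


Section Cvx.
Variable R : realType.

Lemma lin_le (x y u v : R) : x <= y -> v - u = y - x -> u <= v.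
Proof. by move=> H E; rewrite -subr_ge0 E subr_ge0. Qed.

Lemma cvx3 (f : R -> R) : strictly_convex f -> forall x y z, x < y -> y < z ->
  (z - x) * f y <= (z - y) * f x + (y - x) * f z.
Proof.
move=> cf x y z xy yz.
have zx : 0 < z - x by lra.
have zx0 : z - x != 0 by rewrite gt_eqF.
pose s := (z - y) / (z - x).
have s0 : 0 < s by apply: divr_gt0; lra.
have s1 : s < 1 by rewrite /s ltr_pdivrMr //; lra.
have xz : x != z by rewrite lt_eqF //; lra.
have := cf x z s xz; rewrite s0 s1 => /(_ isT).
have -> : s * x + (1 - s) * z = y by rewrite /s; field.
move=> /ltW H.
have := ler_wpM2l (ltW zx) H.
have -> : (z - x) * (s * f x + (1 - s) * f z) = (z - y) * f x + (y - x) * f z.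
  by rewrite /s; field.
done.
Qed.

Lemma lipC (f : R -> R) lo hi p q : strictly_convex f ->
  lo <= p <= hi -> lo <= q <= hi ->
  f q - f p <= (`|f (hi + 1) - f hi| + `|f lo - f (lo - 1)|) * `|q - p|.
Proof.
move=> cf /andP[lp ph] /andP[lq qh].
have n1 := normr_ge0 (f (hi + 1) - f hi).
have n2 := normr_ge0 (f lo - f (lo - 1)).
case: (ltgtP q p) => [qp|pq|->]; last by rewrite !subrr normr0 mulr0.
- have lop : lo < p by lra.
  have A := @cvx3 f cf (lo - 1) q p ltac:(lra) qp.
  have B := @cvx3 f cf (lo - 1) lo p ltac:(lra) lop.
  have c : 0 < p - (lo - 1) by lra.
  have C1 : (p - (lo - 1)) * (f q - f p) <= (p - q) * (f (lo - 1) - f p).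
    by apply: (lin_le A); ring.
  have C2 : f (lo - 1) - f p <= (p - (lo - 1)) * (f (lo - 1) - f lo).
    by apply: (lin_le B); ring.
  have C3 : (p - q) * (f (lo - 1) - f p) <= (p - q) * ((p - (lo - 1)) * (f (lo - 1) - f lo)).
    by apply: ler_wpM2l => //; lra.
  have C4 : f q - f p <= (p - q) * (f (lo - 1) - f lo).
    rewrite -(ler_pM2l c); apply: le_trans C1 _; apply: le_trans C3 _; lra.
  apply: le_trans C4 _.
  have qp' : q - p < 0 by lra.
  rewrite (ltr0_norm qp') opprB mulrC; apply: ler_wpM2r; first lra.
  have H := ler_norm (f (lo - 1) - f lo); rewrite distrC in H; lra.
- have phi : p < hi by lra.
  have A := @cvx3 f cf p q (hi + 1) pq ltac:(lra).
  have B := @cvx3 f cf p hi (hi + 1) phi ltac:(lra).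
  have c : 0 < hi + 1 - p by lra.
  have C1 : (hi + 1 - p) * (f q - f p) <= (q - p) * (f (hi + 1) - f p).
    by apply: (lin_le A); ring.
  have C2 : f (hi + 1) - f p <= (hi + 1 - p) * (f (hi + 1) - f hi).
    by apply: (lin_le B); ring.
  have C3 : (q - p) * (f (hi + 1) - f p) <= (q - p) * ((hi + 1 - p) * (f (hi + 1) - f hi)).
    by apply: ler_wpM2l => //; lra.
  have C4 : f q - f p <= (q - p) * (f (hi + 1) - f hi).
    rewrite -(ler_pM2l c); apply: le_trans C1 _; apply: le_trans C3 _; lra.
  apply: le_trans C4 _.
  have pq' : 0 < q - p by lra.
  rewrite (gtr0_norm pq') mulrC; apply: ler_wpM2r; first lra.
  have := ler_norm (f (hi + 1) - f hi); lra.
Qed.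
End Cvx.


Section App.
Variables (R : realType) (nb : nat) (L G Tl : finType) (Ext : Type).
Variable (A : area R nb L G Tl Ext).
Variables (a : nat) (theta_ext : Ext -> R) (t : Tl).

Local Notation VV := (G + 'I_nb.+1)%type.
Definition zP (z : VV -> R) (g : G) := z (inl g).
Definition zth (z : VV -> R) (i : 'I_nb.+1) := z (inr i).
Definition zT (z : VV -> R) (k : Tl) :=
  (zth z (tbus A k) - theta_ext (text A k)) / xbar A k.
Definition zof (P : G -> R) (th : 'I_nb.+1 -> R) : VV -> R :=
  fun v => match v with inl g => P g | inr i => th i end.
Definition sg (b : bool) : R := if b then 1 else -1.
Definition II := ((('I_nb.+1 * bool) + (G * bool)) + ((L * bool) + (bool + bool)))%type.
Definition flow (z : VV -> R) (l : L) := (zth z (lfrom A l) - zth z (lto A l)) / x A l.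

Definition hc (k : II) (z : VV -> R) : R :=
  match k with
  | inl (inl (i, b)) => sg b * (Btheta A (zth z) i + RT A (zT z) i - MP A (zP z) i + D A i)
  | inl (inr (g, b)) => if b then zP z g - Pmax A g else Pmin A g - zP z g
  | inr (inl (l, b)) => if b then flow z l - Fbar A l else - Fbar A l - flow z l
  | inr (inr (inl b)) => sg b * zT z t
  | inr (inr (inr b)) => if a == 1%N then sg b * zth z ord0 else 0
  end.

Let s := enum (VV : predArgType).

Lemma us : uniq s. Proof. exact: enum_uniq. Qed.
Lemma ins v : v \in s. Proof. by rewrite mem_enum. Qed.

Lemma aff_th i : aff s (fun z => zth z i).
Proof. exact: aff_coord us (ins _). Qed.
Lemma aff_P g : aff s (fun z => zP z g).
Proof. exact: aff_coord us (ins _). Qed.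
Lemma aff_T k : aff s (fun z => zT z k).
Proof. apply: aff_scaler; apply: aff_sub (aff_th _) (aff_cst _ _). Qed.
Lemma aff_flow l : aff s (fun z => flow z l).
Proof. apply: aff_scaler; apply: aff_sub (aff_th _) (aff_th _). Qed.

Lemma aff_hc k : aff s (hc k).
Proof.
case: k => [[[i b]|[g b]]|[[l b]|[b|b]]]; rewrite /hc.
- apply: aff_scale; apply: aff_add; last exact: aff_cst.
  apply: aff_sub; last by apply: aff_sum => g; exact: aff_P.
  apply: aff_add; last by apply: aff_sum => k; exact: aff_T.
  rewrite /Btheta; apply: aff_sub; apply: aff_sum => l; apply: aff_scaler;
    apply: aff_sub; exact: aff_th.
- case: b; [apply: aff_sub (aff_P _) (aff_cst _ _) | apply: aff_sub (aff_cst _ _) (aff_P _)].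
- case: b; [apply: aff_sub (aff_flow _) (aff_cst _ _) | apply: aff_sub (aff_cst _ _) (aff_flow _)].
- apply: aff_scale; exact: aff_T.
- case: (a == 1%N); [apply: aff_scale; exact: aff_th | exact: aff_cst].
Qed.


Lemma hc_le P th T : feasible A a theta_ext P th T ->
  forall k, hc k (zof P th) <= `|T t|.
Proof.
case=> Fb Fg Fl FT Fa.
have ET : zT (zof P th) = T.
  by apply: functional_extensionality => k; rewrite FT.
have n0 := normr_ge0 (T t).
case=> [[[i b]|[g b]]|[[l b]|[b|b]]]; rewrite /hc ?ET.
- change (sg b * (Btheta A th i + RT A T i - MP A P i + D A i) <= `|T t|).
  have -> : Btheta A th i + RT A T i - MP A P i + D A i = 0 by rewrite Fb; ring.
  by rewrite mulr0.
- have := Fg g; change (zP (zof P th) g) with (P g); case: b => /andP[]; lra.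
- have := Fl l; rewrite /flow; change (zth (zof P th)) with (fun i => th i) => /=.
  case: b => /andP[]; lra.
- have := ler_norm (T t); have := ler_norm (- T t); rewrite normrN.
  case: b; rewrite /sg; lra.
- case: eqP => [/Fa|_] //; change (zth (zof P th) ord0) with (th ord0) => ->.
  by rewrite mulr0.
Qed.

Lemma hc_feas z : (forall k, hc k z <= 0) ->
  feasible A a theta_ext (zP z) (zth z) (zT z) /\ zT z t = 0.
Proof.
move=> H; split; last first.
  have := H (inr (inr (inl true))); have := H (inr (inr (inl false))).
  rewrite /hc /sg; lra.
split.
- move=> i; have := H (inl (inl (i, true))); have := H (inl (inl (i, false))).
  rewrite /hc /sg; lra.
- move=> g; have := H (inl (inr (g, true))); have := H (inl (inr (g, false))).
  rewrite /hc => h1 h2; apply/andP; split; lra.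
- move=> l; have := H (inr (inl (l, true))); have := H (inr (inl (l, false))).
  rewrite /hc /flow => h1 h2; apply/andP; split; lra.
- by [].
- move=> a1; have := H (inr (inr (inr true))); have := H (inr (inr (inr false))).
  rewrite /hc a1 eqxx /sg; lra.
Qed.

End App.

Lemma obj_diff (R : realType) (nb : nat) (L G Tl : finType) (Ext : Type)
  (A : area R nb L G Tl Ext) alpha (mu : Tl -> R) P T P' T' :
  objective A alpha mu P' T' - objective A alpha mu P T =
  \sum_g (C A g (P' g) - C A g (P g)) +
  \sum_k (mu k / 2 * (`|T' k| - `|T k|) - alpha (text A k) * (T' k - T k)).
Proof.
rewrite /objective.
have -> : \sum_k (mu k / 2 * (`|T' k| - `|T k|) - alpha (text A k) * (T' k - T k)) =
  (\sum_k mu k / 2 * (`|T' k| - Tbar A k) - \sum_k mu k / 2 * (`|T k| - Tbar A k))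
  - (\sum_k alpha (text A k) * T' k - \sum_k alpha (text A k) * T k).
  by rewrite -!sumrB; apply: eq_bigr => k _; ring.
rewrite sumrB; ring.
Qed.

Unset Implicit Arguments.
Theorem proposition2 (R : realType) (nb : nat) (L G Tl : finType) (Ext : Type)
    (A : area R nb L G Tl Ext) (a : nat)
    (theta_ext alpha : Ext -> R) (mu : Tl -> R) :
  (forall l, 0 < x A l) ->
  (forall t, 0 < xbar A t) ->
  (forall g, strictly_convex (C A g)) ->
  (forall t, 0 <= mu t) ->
  (exists P th T, feasible A a theta_ext P th T /\ forall t, T t = 0) ->
  forall t : Tl, exists mubar : R, 0 < mubar /\
    forall m : R, mubar <= m ->
    forall P th T, optimal A a theta_ext alpha (upd mu t m) P th T -> T t = 0.
Proof.
move=> hx hxb hC hmu [P0 [th0 [T0 [F0 T00]]]] t.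
have H0 : exists z0, forall k, hc A a theta_ext t k z0 <= 0.
  exists (zof P0 th0) => k; have := hc_le t F0 k; by rewrite T00 normr0.
have [K [K0 HK]] := hoffman (us nb G) (@aff_hc R nb L G Tl Ext A a theta_ext t) H0.
pose Lg g := `|C A g (Pmax A g + 1) - C A g (Pmax A g)| +
             `|C A g (Pmin A g) - C A g (Pmin A g - 1)|.
pose W := \sum_g Lg g + \sum_k (`|alpha (text A k)| + mu k / 2) / xbar A k.
have W0 : 0 <= W.
  apply: addr_ge0; apply: sumr_ge0 => k _; first by apply: addr_ge0.
  apply: divr_ge0; last exact: ltW.
  by apply: addr_ge0 => //; apply: divr_ge0.
have WK0 : 0 <= W * K by apply: mulr_ge0.
exists (mu t + 2 * (W * K) + 1); split.
  by have := hmu t; lra.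
move=> m Hm P th T [Fz Opt].
case: (eqVneq (T t) 0) => // Hne; exfalso.
pose r := `|T t|.
have r0 : 0 < r by rewrite normr_gt0.
have [z' [Hz' Dz']] := HK (zof P th) r (ltW r0) (hc_le t Fz).
have [Fz' _] := hc_feas Hz'.
have Hopt := Opt _ _ _ Fz'.
pose P' := zP z'; pose T' := zT A theta_ext z'.
have [_ T't] := hc_feas Hz'.
have [_ Fg _ FT _] := Fz.
have [_ Fg' _ _ _] := Fz'.
have Kr0 : 0 <= K * r by apply: mulr_ge0 => //; apply: ltW.
have DP : forall g, `|P' g - P g| <= K * r.
  by move=> g; apply: (Dz' (inl g)); apply: ins.
have DT : forall k, `|T' k - T k| <= K * r / xbar A k.
  move=> k; rewrite FT /T' /zT /zth.
  have -> : (z' (inr (tbus A k)) - theta_ext (text A k)) / xbar A k -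
            (th (tbus A k) - theta_ext (text A k)) / xbar A k =
            (z' (inr (tbus A k)) - th (tbus A k)) / xbar A k by ring.
  have xi : 0 <= (xbar A k)^-1 by rewrite invr_ge0 ltW.
  rewrite normrM (ger0_norm xi).
  apply: ler_wpM2r; first by rewrite invr_ge0 ltW.
  by apply: (Dz' (inr (tbus A k))); apply: ins.
have S1 : \sum_g (C A g (P' g) - C A g (P g)) <= (\sum_g Lg g) * (K * r).
  rewrite mulr_suml; apply: ler_sum => g _.
  apply: le_trans (lipC (hC g) (Fg g) (Fg' g)) _.
  apply: ler_wpM2l; last exact: DP.
  by apply: addr_ge0.
have S2 : \sum_k (upd mu t m k / 2 * (`|T' k| - `|T k|) - alpha (text A k) * (T' k - T k))
    <= (\sum_k (`|alpha (text A k)| + mu k / 2) / xbar A k) * (K * r) - m / 2 * r.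
  have -> : (\sum_k (`|alpha (text A k)| + mu k / 2) / xbar A k) * (K * r) - m / 2 * r =
     \sum_k ((`|alpha (text A k)| + mu k / 2) * (K * r / xbar A k) - (k == t)%:R * (m / 2 * r)).
    rewrite sumrB mulr_suml; congr (_ - _).
      by apply: eq_bigr => k _; ring.
    rewrite (bigD1 t) //= ?eqxx mul1r big1 ?addr0 // => k /negbTE ->; by rewrite mul0r.
  apply: ler_sum => k _.
  have e0 : 0 <= K * r / xbar A k by apply: divr_ge0 => //; apply: ltW.
  have dk := DT k.
  have al1 : - alpha (text A k) * (T' k - T k) <= `|alpha (text A k)| * (K * r / xbar A k).
    apply: le_trans (ler_norm _) _; rewrite normrM normrN.
    by apply: ler_wpM2l.
  have mu0 : 0 <= mu k / 2 by apply: divr_ge0.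
  have al2 : 0 <= mu k / 2 * (K * r / xbar A k) by apply: mulr_ge0.
  move: al1 al2 dk; rewrite /upd; case: eqP => [->|/eqP nkt] al1 al2 dk.
    have T't' : T' t = 0 := T't.
    move: al1 al2; rewrite T't' normr0 sub0r -/r mulrN mulrDl mul1r; lra.
  rewrite mul0r subr0 mulrDl.
  have : `|T' k| - `|T k| <= `|T' k - T k|.
    by have := ler_normD (T' k - T k) (T k); rewrite subrK; lra.
  move=> nd.
  have : mu k / 2 * (`|T' k| - `|T k|) <= mu k / 2 * (K * r / xbar A k).
    by apply: ler_wpM2l => //; apply: le_trans nd dk.
  move: al1; lra.
have := obj_diff A alpha (upd mu t m) P T P' T'.
have Hm' : (2 * (W * K) + 1) * r <= m * r.
  by apply: ler_wpM2r; [apply: ltW | have := hmu t; lra].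
have e1 : W * (K * r) = (\sum_g Lg g) * (K * r) +
          (\sum_k (`|alpha (text A k)| + mu k / 2) / xbar A k) * (K * r).
  by rewrite /W mulrDl.
have e2 : (2 * (W * K) + 1) * r = 2 * (W * (K * r)) + r by ring.
have e3 : m / 2 * r = m * r / 2 by ring.
move: Hopt; rewrite -/P' -/T'.
lra.
Qed.
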